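(* Let $n\ge2$ and $B_n=\langle a,b\mid ba=b^n\rangle$. 1. If $\mathsf d$ denotes the Levenshtein distance, then $\mathsf c_{\mathsf d}(B_n)=n-1$; and $B_n$ is half-factorial if and only if $n=2$. 2. For all $k,m\in\mathbb N_0$, \[\mathsf L(a^kb^m)=k+m-q_{m,n}(n-2)+(n-2)\cdot[0,q_{m,n}],\] where $q_{m,n}=\lfloor m/(n-1)\rfloor$ if $(n-1)\nmid m$; $q_{m,n}=\frac{m}{n-1}-1$ if $(n-1)\mid m$ and $m\neq0$; and $q_{m,n}=0$ if $m=0$.
   Context: $B_n$ is the monoid with generators $a,b$ and single relation $ba=b^n$; it is reduced and atomic with atoms $a,b$, and every element is uniquely $a^kb^m$ ($k,m\in\mathbb N_0$). Factorizations are words in the free monoid $\mathcal F^*(\{a,b\})$; $\pi$ maps a word to the element it represents; $\sim=\{(x,y)\mid\pi(x)=\pi(y)\}$. $\mathsf L(x)=\{|z|:\pi(z)=x\}$ (with $\mathsf L(1)=\{0\}$). The Levenshtein distance between words $z,z'$ is the minimal number of substitutions, deletions or insertions of single letters needed to transform $z$ into $z'$. For $x\in B_n$, the catenary degree $\mathsf c_{\mathsf d}(x)$ is the least $N\in\mathbb N_0\cup\{\infty\}$ such that any two factorizations $z,z'$ of $x$ are connected by a chain $z=z_0,\dots,z_r=z'$ of factorizations of $x$ with $\mathsf d(z_{i-1},z_i)\le N$; $\mathsf c_{\mathsf d}(B_n)=\sup_x\mathsf c_{\mathsf d}(x)$. Half-factorial: $|\mathsf L(x)|=1$ for all $x$.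 Notation: $[u,v]=\{z\in\mathbb Z:u\le z\le v\}$, $d\cdot L=\{dl:l\in L\}$, $m+L=\{m+l:l\in L\}$. *)

(* Defs.v *)
From mathcomp Require Import all_boot.
Set Implicit Arguments. Unset Strict Implicit. Unset Printing Implicit Defensive.

(* The two atoms a, b; factorizations are words in the free monoid on {a,b}. *)
Inductive letter := La | Lb.
Definition word := seq letter.

(* Two words are related iff they
   represent the same element of B_n (pi z = pi z'). *)
Inductive cong (n : nat) : word -> word -> Prop :=
| cong_rel (u v : word) : cong n (u ++ [:: Lb; La] ++ v) (u ++ nseq n Lb ++ v)
| cong_refl (z : word) : cong n z z
| cong_sym (z z' : word) : cong n z z' -> cong n z' z
| cong_trans (z1 z2 z3 : word) : cong n z1 z2 -> cong n z2 z3 -> cong n z1 z3.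

(* An element x of B_n is given by any word w with pi w = x; the
   factorizations of x are then the words z with cong n w z. *)

Definition akbm (k m : nat) : word := nseq k La ++ nseq m Lb.

Definition lengths (n : nat) (w : word) (l : nat) : Prop :=
  exists z, cong n w z /\ size z = l.

Inductive edit1 : word -> word -> Prop :=
| ed_sub (u v : word) (x y : letter) : edit1 (u ++ x :: v) (u ++ y :: v)
| ed_del (u v : word) (x : letter) : edit1 (u ++ x :: v) (u ++ v)
| ed_ins (u v : word) (x : letter) : edit1 (u ++ v) (u ++ x :: v).

Inductive nedits : nat -> word -> word -> Prop :=
| ned0 (z : word) : nedits 0 z z
| nedS (k : nat) (z y z' : word) : edit1 z y -> nedits k y z' -> nedits k.+1 z z'.

(* d(z,z') <= N, where d is the Levenshtein distance (minimal number of edits). *)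
Definition lev_le (N : nat) (z z' : word) : Prop :=
  exists k, k <= N /\ nedits k z z'.

Inductive chain (R : word -> word -> Prop) : word -> word -> Prop :=
| chain_nil (z : word) : chain R z z
| chain_cons (z y z' : word) : R z y -> chain R y z' -> chain R z z'.

Definition catenary_ok (n N : nat) (w : word) : Prop :=
  forall z z', cong n w z -> cong n w z' ->
    chain (fun u v => cong n w v /\ lev_le N u v) z z'.

Definition catenary_degree_elt (n : nat) (w : word) (N : nat) : Prop :=
  catenary_ok n N w /\ forall M, catenary_ok n M w -> N <= M.

Definition half_factorial (n : nat) : Prop :=
  forall w z z', cong n w z -> cong n w z' -> size z = size z'.

Definition qmn (m n : nat) : nat :=
  if m == 0 then 0
  else if (n.-1 %| m) then m %/ n.-1 - 1 else m %/ n.-1.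

(* Main.v *)
Require Import Defs.
From mathcomp Require Import all_boot.
From mathcomp Require Import zify.
From Stdlib Require Import Classical.

Definition isA (x : letter) : bool := if x is La then true else false.
Definition isB (x : letter) : bool := if x is Lb then true else false.

Section S.
Variable n : nat.
Hypothesis hn : 2 <= n.

Definition tv (z : word) := count isB z + n.-1 * count isA z.

Fixpoint nfk (z : word) : nat :=
  match z with [::] => 0 | La :: z' => (nfk z').+1 | Lb :: _ => 0 end.
Fixpoint nfm (z : word) : nat :=
  match z with [::] => 0 | La :: z' => nfm z' | Lb :: z' => (tv z').+1 end.

Lemma nfk_nseq k z : nfk (nseq k La ++ z) = k + nfk z.
Proof. by elim: k => //= k ->. Qed.
Lemma nfm_nseq k z : nfm (nseq k La ++ z) = nfm z.
Proof. by elim: k. Qed.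

Lemma nfk_akbm k m : nfk (akbm k m) = k.
Proof. rewrite /akbm nfk_nseq; by case: m => [|m] /=; rewrite addn0. Qed.
Lemma nfm_akbm k m : nfm (akbm k m) = m.
Proof.
rewrite /akbm nfm_nseq; case: m => [|m] //=.
by rewrite /tv !count_nseq /= mul0n muln0 addn0 mul1n.
Qed.

Lemma nf_rel u v :
  nfk (u ++ [:: Lb; La] ++ v) = nfk (u ++ nseq n Lb ++ v) /\
  nfm (u ++ [:: Lb; La] ++ v) = nfm (u ++ nseq n Lb ++ v).
Proof.
elim: u => [|[] u IH] /=.
- have E : nseq n Lb = Lb :: nseq n.-1 Lb by rewrite -{1}(prednK (ltnW hn)).
  rewrite E /=; split=> //.
  rewrite /tv /= count_cat !count_nseq /=. rewrite count_cat count_nseq /=; lia.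
- by case: IH => -> ->.
- split=> //; rewrite /tv !count_cat !count_nseq /=. lia.
Qed.

Lemma cong_nf w z : cong n w z -> nfk w = nfk z /\ nfm w = nfm z.
Proof.
elim=> [u v|z0|z1 z2 _ [-> ->]|z1 z2 z3 _ [-> ->] _ [-> ->]] //.
exact: nf_rel.
Qed.

Lemma decomp z : (exists u v, z = u ++ Lb :: La :: v) \/
                 (exists i j, z = akbm i j).
Proof.
elim: z => [|x z [[u [v ->]]|[i [j ->]]]].
- by right; exists 0, 0.
- by left; exists (x :: u), v.
- case: x.
  + by right; exists i.+1, j.
  + case: i => [|i].
    * by right; exists 0, j.+1.
    * by left; exists [::], (nseq i La ++ nseq j Lb).
Qed.

Lemma cong_canon z : cong n z (akbm (nfk z) (nfm z)).
Proof.
move Hc: (count isA z) => c; elim: c z Hc => [|c IH] z Hc;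
  case: (decomp z) => [[u [v Ez]]|[i [j Ez]]];
  try by rewrite Ez nfk_akbm nfm_akbm; exact: cong_refl.
- by move: Hc; rewrite Ez count_cat /=; lia.
- have H1 := cong_rel n u v.
  have [Ek Em] := nf_rel u v.
  rewrite Ez -[Lb :: La :: v]/([:: Lb; La] ++ v) Ek Em.
  apply: cong_trans H1 _; apply: IH.
  by move: Hc; rewrite Ez !count_cat count_nseq /=; lia.
Qed.

Lemma cong_of_nf w z : nfk w = nfk z -> nfm w = nfm z -> cong n w z.
Proof.
move=> Ek Em; apply: cong_trans (cong_canon w) _; rewrite Ek Em.
exact/cong_sym/cong_canon.
Qed.


Lemma size_ab z : size z = count isA z + count isB z.
Proof. by elim: z => [|[] z IH] //=; rewrite IH; lia. Qed.

Lemma inv_size z : size z + (n - 2) * count isA z = n.-1 * nfk z + nfm z.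
Proof.
elim: z => [|[] z IH] /=; first by rewrite !muln0.
- rewrite mulnDr muln1 mulnS; lia.
- rewrite /tv size_ab add0n muln0 (_ : n.-1 = (n - 2).+1); last lia.
  rewrite mulSn; lia.
Qed.

Lemma inv_k z : nfk z <= count isA z.
Proof. by elim: z => [|[] z IH] //=. Qed.

Lemma inv_m0 z : nfm z = 0 -> count isA z = nfk z.
Proof. by elim: z => [|[] z IH] //= /IH ->. Qed.

Lemma inv_mpos z : 0 < nfm z -> n.-1 * count isA z + 1 <= n.-1 * nfk z + nfm z.
Proof.
elim: z => [|[] z IH] //=.
- move=> /IH; lia.
- rewrite /tv; lia.
Qed.

Lemma qbound m : 0 < m -> qmn m n * n.-1 <= m.-1 /\ m.-1 < (qmn m n).+1 * n.-1.
Proof.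
move=> m0; rewrite /qmn /dvdn.
have n1 : 0 < n.-1 by lia.
have Em := divn_eq m n.-1; have Hr := ltn_pmod m n1.
have -> : (m == 0) = false by lia.
move: Em Hr; case: (m %/ n.-1) => [|d]; case: (m %% n.-1) => [|r];
  rewrite ?eqxx /=; try nia.
Qed.

Lemma len_fwd z : exists i, i <= qmn (nfm z) n /\
   size z + qmn (nfm z) n * (n - 2) = nfk z + nfm z + (n - 2) * i.
Proof.
have Hs := inv_size z; have Hk := inv_k z.
set q := qmn (nfm z) n.
have Hal : count isA z - nfk z <= q.
  case: (posnP (nfm z)) => [m0|mp].
  - by rewrite inv_m0 // subnn.
  - have Hm := inv_mpos _ mp; have [_ Hq] := qbound _ mp.
    rewrite -ltnS -(ltn_pmul2r (_ : 0 < n.-1)); last lia.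
    nia.
exists (q - (count isA z - nfk z)); split; first lia.
nia.
Qed.


Lemma len_bwd k m l i : i <= qmn m n -> l + qmn m n * (n - 2) = k + m + (n - 2) * i ->
  exists z, nfk z = k /\ nfm z = m /\ size z = l.
Proof.
case: (posnP m) => [->|mp].
- rewrite /qmn /= leqn0 => /eqP -> /=; rewrite !muln0 !addn0 => ->.
  by exists (akbm k 0); rewrite nfk_akbm nfm_akbm /akbm cats0 size_nseq.
- move=> Hi Hl; have [Hq _] := qbound _ mp.
  move: Hi Hl Hq; set q := qmn m n => Hi Hl Hq.
  set al := q - i.
  have Hal : al * n.-1 <= m.-1 by apply: leq_trans Hq; apply: leq_mul; lia.
  exists (nseq k La ++ Lb :: nseq al La ++ nseq (m.-1 - al * n.-1) Lb).
  rewrite nfk_nseq nfm_nseq /= /tv count_cat !count_nseq /= size_cat /=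
    size_cat !size_nseq count_cat !count_nseq /=.
  split; first by lia.
  split; first by rewrite mulnC; lia.
  have Eq : q = al + i by lia.
  rewrite Eq in Hl.
  have -> : n.-1 = (n - 2).+1 by lia.
  rewrite (_ : n.-1 = (n - 2).+1) in Hal; last lia.
  move: Hl Hal; rewrite mulnDl !mulnS. lia.
Qed.


Lemma edit1_sym x y : edit1 x y -> edit1 y x.
Proof. case=> u v *; [exact: ed_sub|exact: ed_ins|exact: ed_del]. Qed.

Lemma nedits_snoc k x y z : nedits k x y -> edit1 y z -> nedits k.+1 x z.
Proof.
elim=> [z0|k' a b c Hab _ IH] Hyz.
- by apply: nedS Hyz _; exact: ned0.
- by apply: nedS Hab _; exact: IH.
Qed.

Lemma nedits_sym k x y : nedits k x y -> nedits k y x.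
Proof.
elim=> [z0|k' a b c Hab _ IH]; first exact: ned0.
exact: (nedits_snoc _ _ _ _ IH (edit1_sym _ _ Hab)).
Qed.

Lemma nedits_ins j u v : nedits j (u ++ v) (u ++ nseq j Lb ++ v).
Proof.
elim: j u => [|j IH] u; first exact: ned0.
apply: nedS (ed_ins u v Lb) _.
have -> : u ++ nseq j.+1 Lb ++ v = (u ++ [:: Lb]) ++ nseq j Lb ++ v by rewrite -catA.
have -> : u ++ Lb :: v = (u ++ [:: Lb]) ++ v by rewrite -catA.
exact: IH.
Qed.

Lemma step_edits u v : nedits n.-1 (u ++ Lb :: La :: v) (u ++ nseq n Lb ++ v).
Proof.
have -> : n.-1 = (n - 2).+1 by lia.
have E1 : u ++ Lb :: La :: v = (u ++ [:: Lb]) ++ La :: v by rewrite -catA.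
rewrite E1; apply: nedS (ed_sub _ _ La Lb) _.
have -> : (u ++ [:: Lb]) ++ Lb :: v = (u ++ [:: Lb; Lb]) ++ v by rewrite -!catA.
have Hn : n = (n - 2).+2 by lia.
have -> : u ++ nseq n Lb ++ v = (u ++ [:: Lb; Lb]) ++ nseq (n - 2) Lb ++ v.
  by rewrite -catA {1}Hn.
exact: nedits_ins.
Qed.

Lemma edit1_cntB x y : edit1 x y -> count isB y <= (count isB x).+1.
Proof. case=> u v [] *; rewrite !count_cat /=; try case: y0 => /=; lia. Qed.

Lemma nedits_cntB k x y : nedits k x y -> count isB y <= count isB x + k.
Proof.
elim=> [z0|k' a b c Hab _ IH]; first by rewrite addn0.
have := edit1_cntB _ _ Hab; lia.
Qed.

Definition Rel N w := fun u v => cong n w v /\ lev_le N u v.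

Lemma chain_snoc R x y z : chain R x y -> R y z -> chain R x z.
Proof.
elim=> [z0|a b c Hab _ IH] Hyz.
- by apply: chain_cons Hyz _; exact: chain_nil.
- by apply: chain_cons Hab _; exact: IH.
Qed.

Lemma chain_cat R x y z : chain R x y -> chain R y z -> chain R x z.
Proof.
elim=> [z0|a b c Hab _ IH] // Hyz.
by apply: chain_cons Hab _; exact: IH.
Qed.

Lemma chain_rev N w x y : chain (Rel N w) x y -> cong n w x -> chain (Rel N w) y x.
Proof.
elim=> [z0|a b c [Hb [k [Hk Hab]]] _ IH] Hx; first exact: chain_nil.
apply: chain_snoc (IH Hb) _; split=> //.
by exists k; split=> //; exact: nedits_sym.
Qed.

Lemma chain_canon w z : cong n w z -> chain (Rel n.-1 w) z (akbm (nfk z) (nfm z)).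
Proof.
move Hc: (count isA z) => c; elim: c z Hc => [|c IH] z Hc Hwz;
  case: (decomp z) => [[u [v Ez]]|[i [j Ez]]];
  try by rewrite Ez nfk_akbm nfm_akbm; exact: chain_nil.
- by move: Hc; rewrite Ez count_cat /=; lia.
- have H1 := cong_rel n u v.
  have [Ek Em] := nf_rel u v.
  rewrite Ez -[Lb :: La :: v]/([:: Lb; La] ++ v) Ek Em.
  apply: chain_cons (IH _ _ _); last 2 first.
  + by move: Hc; rewrite Ez !count_cat count_nseq /=; lia.
  + by apply: cong_trans H1; rewrite -Ez.
  split; first by apply: cong_trans H1; rewrite -Ez.
  by exists n.-1; split=> //; exact: step_edits.
Qed.

Lemma cat_ok w : catenary_ok n n.-1 w.
Proof.
move=> z z' Hz Hz'.
have [Ek Em] := cong_nf _ _ (cong_trans (cong_sym Hz) Hz').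
apply: chain_cat (chain_canon _ _ Hz) _.
rewrite Ek Em; apply: chain_rev (chain_canon _ _ Hz') _.
exact: Hz'.
Qed.


Lemma ba_cntB v : cong n [:: Lb; La] v -> count isB v = 1 \/ count isB v = n.
Proof.
move=> /cong_nf [Ek Em]; move: Ek Em.
case: v => [|[] v] //=; rewrite /tv /= => _ [Em].
case: (count isA v) Em => [|[|c]] Em; rewrite ?addn0 ?muln0 ?muln1 in Em; nia.
Qed.

Lemma lower_inv M x y : M < n.-1 ->
  chain (fun u v => cong n [:: Lb; La] v /\ lev_le M u v) x y ->
  count isB x = 1 -> count isB y = 1.
Proof.
move=> HM; elim=> [z0|a b c [Hb [k [Hk Hab]]] _ IH] // Ha; apply: IH.
have := nedits_cntB _ _ _ Hab; have := ba_cntB _ Hb; lia.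
Qed.

End S.

Lemma min_exists (P : nat -> Prop) x : P x -> exists N, P N /\ forall M, P M -> N <= M.
Proof.
elim/ltn_ind: x => x IH Px.
case: (classic (exists M, M < x /\ P M)) => [[M [lt PM]]|H].
- exact: IH lt PM.
- exists x; split=> // M PM; rewrite leqNgt; apply/negP => lt.
  by apply: H; exists M.
Qed.

Lemma cong_size2 w z : cong 2 w z -> size w = size z.
Proof.
elim=> [u v|z0|z1 z2 _ ->|z1 z2 z3 _ -> _ ->] //.
by rewrite !size_cat.
Qed.

Theorem theorem4p1 (n : nat) (hn : 2 <= n) :
  ((forall w : word, exists N, catenary_degree_elt n w N) /\
   (forall (w : word) (N : nat), catenary_degree_elt n w N -> N <= n - 1) /\
   (exists w : word, catenary_degree_elt n w (n - 1))) /\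
  (half_factorial n <-> n = 2) /\
  (forall k m l : nat,
     lengths n (akbm k m) l <->
     exists i, i <= qmn m n /\ l + qmn m n * (n - 2) = k + m + (n - 2) * i).
Proof.
have Hok : forall w, catenary_ok n (n - 1) w by move=> w; rewrite subn1; exact: cat_ok.
have Hba : cong n [:: Lb; La] (nseq n Lb).
  by have := cong_rel n [::] [::]; rewrite /= cats0.
split; [split; [|split]|split].
- by move=> w; apply: min_exists (Hok w).
- by move=> w N [_ H]; apply: H.
- exists [:: Lb; La]; split; first exact: Hok.
  move=> M HM; rewrite leqNgt; apply/negP => lt.
  have Hc := HM _ _ (cong_refl n [:: Lb; La]) Hba.
  rewrite subn1 in lt; have := @lower_inv n hn M _ _ lt Hc; rewrite count_nseq /=.
  move=> H; have := H erefl; lia.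
- split.
  + move=> Hh; have := Hh _ _ _ (cong_refl n [:: Lb; La]) Hba.
    by rewrite size_nseq.
  + move=> En w z z' Hz Hz'; subst n.
    by rewrite -(cong_size2 _ _ Hz) -(cong_size2 _ _ Hz').
- move=> k m l; split.
  + case=> z [Hz <-].
    have [Ek Em] := cong_nf n hn _ _ Hz; rewrite nfk_akbm nfm_akbm in Ek Em.
    by rewrite Ek Em; apply: len_fwd.
  + case=> i [Hi Hl].
    have [z [Ek [Em Es]]] := @len_bwd n hn _ _ _ _ Hi Hl.
    exists z; split=> //; apply: cong_of_nf => //.
    by rewrite nfk_akbm. by rewrite nfm_akbm.
Qed.
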